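(* Let $H$ be a complex Hilbert space and let $\varphi_n,\psi_n\in C[0,1]$ ($n\ge1$) be real-valued with $\varphi_n\to1$ and $\psi_n\to0$ (pointwise on $[0,1]$) as $n\to\infty$. Then for every $t\in[0,1]$, $\lim_{n\to\infty}n_t(\varphi_n,\psi_n;H)=\frac12$.
   Context: $S_1(H)$ is the unit sphere of $H$; for real $\varphi,\psi$ on $[0,1]$, $\omega_t(\varphi,\psi;A)=\sup_{x\in S_1(H)}|\langle(\varphi(t)A+\psi(t)A^* )x,x\rangle|$, and the weighted numerical index is $n_t(\varphi,\psi;H)=\inf\{\omega_t(\varphi,\psi;A):A\in\mathbb{B}(H),\ \|A\|=1\}$. *)

(* Defs.v *)
From HB Require Import structures.
From mathcomp Require Import all_boot all_order all_algebra.
From mathcomp Require Import all_classical all_reals all_analysis.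
From mathcomp Require Import complex.
Set Implicit Arguments. Unset Strict Implicit. Unset Printing Implicit Defensive.
Import Order.TTheory GRing.Theory Num.Theory.
Local Open Scope ring_scope.
Local Open Scope classical_set_scope.
Local Open Scope complex_scope.

Definition inner_product (R : realType) (V : lmodType R[i]) (ip : V -> V -> R[i]) :=
  [/\ (forall (a : R[i]) (x y z : V), ip (a *: x + y) z = a * ip x z + ip y z),
      (forall x y : V, ip y x = (ip x y)^*),
      (forall x : V, 0 <= ip x x) &
      (forall x : V, ip x x = 0 -> x = 0)].

Definition hnorm (R : realType) (V : lmodType R[i]) (ip : V -> V -> R[i]) (x : V) : R :=
  Num.sqrt (complex.Re (ip x x)).

Definition hcomplete (R : realType) (V : lmodType R[i]) (ip : V -> V -> R[i]) :=
  forall u : nat -> V,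
    (forall e : R, 0 < e -> exists N : nat, forall m n : nat, (N <= m)%N -> (N <= n)%N ->
        hnorm ip (u m - u n) < e) ->
    exists l : V, forall e : R, 0 < e -> exists N : nat, forall n : nat, (N <= n)%N ->
        hnorm ip (u n - l) < e.

Definition hilbert (R : realType) (V : lmodType R[i]) (ip : V -> V -> R[i]) :=
  inner_product ip /\ hcomplete ip.

Definition unit_sphere (R : realType) (V : lmodType R[i]) (ip : V -> V -> R[i]) : set V :=
  [set x | hnorm ip x = 1].

Definition bounded_op (R : realType) (V : lmodType R[i]) (ip : V -> V -> R[i]) (A : V -> V) :=
  (forall (a : R[i]) (x y : V), A (a *: x + y) = a *: A x + A y) /\
  exists M : R, forall x : V, hnorm ip (A x) <= M * hnorm ip x.

Definition is_adjoint (R : realType) (V : lmodType R[i]) (ip : V -> V -> R[i]) (A B : V -> V) :=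
  forall x y : V, ip (A x) y = ip x (B y).

Definition opnorm (R : realType) (V : lmodType R[i]) (ip : V -> V -> R[i]) (A : V -> V) : R :=
  sup [set hnorm ip (A x) | x in unit_sphere ip].

(* omega_t(phi,psi;A) = sup_{x in S_1(H)} |<(phi(t)A + psi(t)A^* ) x, x>|, with B = A^* *)
Definition omega_t (R : realType) (V : lmodType R[i]) (ip : V -> V -> R[i])
  (phi psi : R -> R) (t : R) (A B : V -> V) : R :=
  sup [set ComplexField.Normc.normc (ip ((phi t)%:C *: A x + (psi t)%:C *: B x) x) | x in unit_sphere ip].

Definition n_t (R : realType) (V : lmodType R[i]) (ip : V -> V -> R[i])
  (phi psi : R -> R) (t : R) : R :=
  inf [set w : R | exists A B : V -> V,
          [/\ bounded_op ip A, opnorm ip A = 1, is_adjoint ip A B &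
               w = omega_t ip phi psi t A B]].

(* Main.v *)
Require Import Defs.
From HB Require Import structures.
From mathcomp Require Import all_boot all_order all_algebra.
From mathcomp Require Import all_classical all_reals all_analysis.
From mathcomp Require Import complex.
From mathcomp Require Import ring lra.
Import Order.TTheory GRing.Theory Num.Theory.
Import numFieldNormedType.Exports.
Set Implicit Arguments. Unset Strict Implicit.
Local Open Scope ring_scope.
Local Open Scope classical_set_scope.


Section IP.
Local Open Scope complex_scope.
Variable R : realType.
Variable V : lmodType R[i].
Variable ip : V -> V -> R[i].
Hypothesis hip : inner_product ip.

Lemma conj_i : Num.conj (Num.imaginary : R[i]) = - Num.imaginary.
Proof. exact: conjCi. Qed.
Lemma i_i : (Num.imaginary : R[i]) * Num.imaginary = -1.
Proof. exact: mulCii. Qed.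

Lemma ipZDl a x y z : ip (a *: x + y) z = a * ip x z + ip y z.
Proof. by case: hip. Qed.
Lemma ipC x y : ip y x = (ip x y)^*.
Proof. by case: hip. Qed.
Lemma ip_ge0 x : 0 <= ip x x. Proof. by case: hip. Qed.

Lemma ipDl x y z : ip (x + y) z = ip x z + ip y z.
Proof. by rewrite -[x in LHS]scale1r ipZDl mul1r. Qed.
Lemma ip0l z : ip 0 z = 0.
Proof. by have := ipDl 0 0 z; rewrite addr0 => /(congr1 (fun w => w - ip 0 z)); rewrite subrr addrK. Qed.
Lemma ipZl a x z : ip (a *: x) z = a * ip x z.
Proof. by rewrite -[_ *: x]addr0 ipZDl ip0l addr0. Qed.
Lemma ipNl x z : ip (- x) z = - ip x z.
Proof. by rewrite -scaleN1r ipZl mulN1r. Qed.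
Lemma ipBl x y z : ip (x - y) z = ip x z - ip y z.
Proof. by rewrite ipDl ipNl. Qed.
Lemma ipDr x y z : ip z (x + y) = ip z x + ip z y.
Proof. by rewrite ipC ipDl rmorphD /= -!ipC. Qed.
Lemma ipZr a x z : ip z (a *: x) = a^* * ip z x.
Proof. by rewrite ipC ipZl rmorphM /= -ipC. Qed.
Lemma ipNr x z : ip z (- x) = - ip z x.
Proof. by rewrite ipC ipNl rmorphN /= -ipC. Qed.
Lemma ipBr x y z : ip z (x - y) = ip z x - ip z y.
Proof. by rewrite ipDr ipNr. Qed.
Lemma ip0r z : ip z 0 = 0.
Proof. by rewrite ipC ip0l conjc0. Qed.

Definition q x : R := complex.Re (ip x x).
Lemma ipxx x : ip x x = (q x)%:C.
Proof.
have := ip_ge0 x; rewrite /q; case: (ip x x) => a b.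
by rewrite lecE /= => /andP[/eqP -> _].
Qed.
Lemma q_ge0 x : 0 <= q x.
Proof. by rewrite -lecR -ipxx ip_ge0. Qed.

Lemma hnormE x : hnorm ip x = Num.sqrt (q x). Proof. by []. Qed.

Lemma unitE' x : hnorm ip x = 1 <-> ip x x = 1.
Proof.
rewrite ipxx hnormE; split.
  by move=> h; rewrite -(sqr_sqrtr (q_ge0 x)) h expr1n.
by case=> ->; rewrite sqrtr1.
Qed.

Lemma normC_def (z : R[i]) : `|z| = (ComplexField.Normc.normc z)%:C. Proof. by []. Qed.

Lemma mulcJ (a : R[i]) : a * a^* = `|a| ^+ 2.
Proof. by rewrite sqr_normc. Qed.

Lemma bessel1 x e : ip e e = 1 -> `|ip x e| ^+ 2 <= ip x x.
Proof.
move=> he; set a := ip x e.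
have h := ip_ge0 (x - a *: e).
rewrite ipBl !ipBr !ipZl !ipZr he -/a (ipC x e) -/a mulr1 in h.
rewrite -mulcJ -subr_ge0.
by move: h; congr (_ <= _); ring.
Qed.

Lemma bessel2 x e1 e2 : ip e1 e1 = 1 -> ip e2 e2 = 1 -> ip e1 e2 = 0 ->
  `|ip x e1| ^+ 2 + `|ip x e2| ^+ 2 <= ip x x.
Proof.
move=> h1 h2 h12; set a := ip x e1; set b := ip x e2.
have h21 : ip e2 e1 = 0 by rewrite ipC h12 conjc0.
have h := ip_ge0 (x - a *: e1 - b *: e2).
rewrite !(ipBl, ipBr, ipZl, ipZr) h1 h2 h12 h21 -/a -/b (ipC x e1) (ipC x e2) -/a -/b in h.
rewrite -!mulcJ -subr_ge0.
by move: h; congr (_ <= _); ring.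
Qed.


Notation Nc := (@ComplexField.Normc.normc R).

Lemma Nc_ge0 c : 0 <= Nc c.
Proof. by case: c => a b /=; rewrite sqrtr_ge0. Qed.
Lemma NcM c d : Nc (c * d) = Nc c * Nc d.
Proof. exact: ComplexField.Normc.normcM. Qed.
Lemma NcD c d : Nc (c + d) <= Nc c + Nc d.
Proof. exact: le_normcD. Qed.
Lemma NcN c : Nc (- c) = Nc c.
Proof. exact: normcN. Qed.
Lemma NcJ c : Nc (c^*) = Nc c.
Proof. by case: c => a b /=; rewrite sqrrN. Qed.
Lemma NcR (a : R) : Nc (a%:C) = `|a|.
Proof. by rewrite /= expr0n /= addr0 sqrtr_sqr. Qed.
Lemma Nc_i : Nc (Num.imaginary : R[i]) = 1.
Proof. by apply: complexI; rewrite -normC_def normCi. Qed.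
Lemma Nc2 c : ((Nc c) ^+ 2)%:C = c * c^*.
Proof. by rewrite mulcJ normC_def rmorphXn. Qed.
Lemma Nc0 : Nc 0 = 0.
Proof. exact: ComplexField.Normc.normc0. Qed.

Lemma bessel1R x e : ip e e = 1 -> Nc (ip x e) ^+ 2 <= q x.
Proof. by move=> he; rewrite -lecR Nc2 mulcJ -ipxx bessel1. Qed.

Lemma bessel2R x e1 e2 : ip e1 e1 = 1 -> ip e2 e2 = 1 -> ip e1 e2 = 0 ->
  Nc (ip x e1) ^+ 2 + Nc (ip x e2) ^+ 2 <= q x.
Proof. by move=> h1 h2 h12; rewrite -lecR rmorphD /= !Nc2 !mulcJ -ipxx bessel2. Qed.

Lemma q_eq0 x : q x = 0 -> x = 0.
Proof. by move=> h; case: hip => _ _ _; apply; rewrite ipxx h. Qed.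


Lemma conjR (k : R) : Num.conj (k%:C : R[i]) = k%:C.
Proof. by apply/eqP; rewrite eq_complex /= oppr0 !eqxx. Qed.

Lemma unit_sphereE x : unit_sphere ip x <-> ip x x = 1.
Proof. exact: unitE'. Qed.


Lemma mulR (x y : R) : (x%:C : R[i]) * y%:C = (x * y)%:C.
Proof. by apply/eqP; rewrite eq_complex /= !mulr0 !mul0r subr0 addr0 !eqxx. Qed.

Lemma NconjK (z : R[i]) : Num.conj (conjc z) = z.
Proof. by case: z => x y; apply/eqP; rewrite eq_complex /= opprK !eqxx. Qed.

Lemma NcJ' c : Nc (conjc c) = Nc c.
Proof. by case: c => x y /=; rewrite sqrrN. Qed.

End IP.


Section Op.
Local Open Scope complex_scope.
Variable R : realType.
Variable V : lmodType R[i].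
Variable ip : V -> V -> R[i].
Hypothesis hip : inner_product ip.
Notation Nc := (@ComplexField.Normc.normc R).
Notation q := (@q _ _ ip).

Variables A B : V -> V.
Hypothesis hA : bounded_op ip A.
Hypothesis hadj : is_adjoint ip A B.

Lemma AZD a x y : A (a *: x + y) = a *: A x + A y.
Proof. by case: hA. Qed.
Lemma A0 : A 0 = 0.
Proof.
have := AZD 1 0 0; rewrite !scale1r addr0 => h.
have := congr1 (fun wv => wv - A 0) h; rewrite /= subrr addrK; done.
Qed.
Lemma AZ a x : A (a *: x) = a *: A x.
Proof. by rewrite -[_ *: x]addr0 AZD A0 addr0. Qed.
Lemma AD x y : A (x + y) = A x + A y.
Proof. by rewrite -[x in LHS]scale1r AZD scale1r. Qed.
Lemma AN x : A (- x) = - A x.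
Proof. by rewrite -scaleN1r AZ scaleN1r. Qed.
Lemma AB x y : A (x - y) = A x - A y.
Proof. by rewrite AD AN. Qed.

Lemma ipB x : ip (B x) x = (ip (A x) x)^*.
Proof. by rewrite (ipC hip) -hadj. Qed.

Definition Pa v := ip (A v) v.

Lemma polar x y :
  4%:R * ip (A x) y = Pa (x + y) - Pa (x - y) + 'i * Pa (x + 'i *: y) - 'i * Pa (x - 'i *: y).
Proof.
rewrite /Pa !(AD, AB, AN, AZ) !(ipDl hip, ipBl hip, ipNl hip, ipZl hip, ipDr hip, ipBr hip, ipNr hip, ipZr hip) conj_i.
set j := Num.imaginary.
have hj : j * j = -1 by exact: i_i.
set a1 := ip (A x) x; set b1 := ip (A x) y; set c1 := ip (A y) x; set d1 := ip (A y) y.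
transitivity (4%:R * b1 + 2%:R * (j * j + 1) * (c1 - b1)); first by rewrite hj; ring.
ring.
Qed.

Lemma polarq x y :
  ip (x + y) (x + y) + ip (x - y) (x - y) + ip (x + 'i *: y) (x + 'i *: y) + ip (x - 'i *: y) (x - 'i *: y)
  = 4%:R * (ip x x + ip y y).
Proof.
rewrite !(ipDl hip, ipBl hip, ipNl hip, ipZl hip, ipDr hip, ipBr hip, ipNr hip, ipZr hip) conj_i.
set j := Num.imaginary.
have hj : j * j = -1 by exact: i_i.
transitivity (4%:R * (ip x x + ip y y) - 2%:R * (j * j + 1) * ip y y); last by rewrite hj; ring.
ring.
Qed.


Hypothesis hn : opnorm ip A = 1.

Lemma T_ub : has_ubound [set hnorm ip (A x) | x in unit_sphere ip].
Proof.
case: hA => _ [M hM]; exists M => _ [y hy <-].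
by have := hM y; rewrite hy mulr1.
Qed.

Lemma Ax_le1 x : ip x x = 1 -> q (A x) <= 1.
Proof.
move=> hx.
have h : hnorm ip (A x) <= 1.
  rewrite -hn; apply: (ub_le_sup T_ub); exists x => //.
  exact/(unit_sphereE hip).
move: h; rewrite hnormE => h.
have h0 := sqrtr_ge0 (q (A x)).
have := sqr_sqrtr (q_ge0 hip (A x)).
nra.
Qed.

Lemma P_le1 x : ip x x = 1 -> Nc (Pa x) <= 1.
Proof.
move=> hx; have h1 := bessel1R hip (A x) hx; have h2 := Ax_le1 hx.
have h3 := Nc_ge0 (Pa x); rewrite /Pa in h3 *; nra.
Qed.

Variables a b : R.
Definition Sset := [set Nc (ip (a%:C *: A x + b%:C *: B x) x) | x in unit_sphere ip].

Lemma ipS x : ip (a%:C *: A x + b%:C *: B x) x = a%:C * Pa x + b%:C * Num.conj (Pa x).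
Proof. by rewrite (ipDl hip) !(ipZl hip) ipB. Qed.

Lemma S_ub : has_ubound Sset.
Proof.
exists (`|a| + `|b|) => _ [x hx <-]; rewrite ipS.
have hx1 := P_le1 (proj1 (unit_sphereE hip x) hx).
have := NcD (a%:C * Pa x) (b%:C * Num.conj (Pa x)).
rewrite !NcM !NcR NcJ => h.
have := normr_ge0 a; have := normr_ge0 b; have := Nc_ge0 (Pa x); nra.
Qed.

Lemma Pw x : ip x x = 1 -> Nc (Pa x) <= sup Sset + (`|a - 1| + `|b|).
Proof.
move=> hx.
have hS : Nc (a%:C * Pa x + b%:C * Num.conj (Pa x)) <= sup Sset.
  by apply: (ub_le_sup S_ub); exists x; [exact/(unit_sphereE hip)| rewrite ipS].
have e : Pa x = (a%:C * Pa x + b%:C * Num.conj (Pa x)) + (- ((a - 1)%:C * Pa x)) + (- (b%:C * Num.conj (Pa x))).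
  by rewrite rmorphB rmorph1 /=; ring.
have h1 := NcD (a%:C * Pa x + b%:C * Num.conj (Pa x) + - ((a - 1)%:C * Pa x)) (- (b%:C * Num.conj (Pa x))).
have h2 := NcD (a%:C * Pa x + b%:C * Num.conj (Pa x)) (- ((a - 1)%:C * Pa x)).
rewrite !NcN !NcM !NcR NcJ -e in h1 h2.
have := P_le1 hx; have := normr_ge0 (a - 1); have := normr_ge0 b; have := Nc_ge0 (Pa x); nra.
Qed.

Definition wv := sup Sset + (`|a - 1| + `|b|).

Lemma Pv v : Nc (Pa v) <= wv * q v.
Proof.
have [hq|hq] := eqVneq (q v) 0.
  by rewrite hq mulr0 (q_eq0 hip hq) /Pa A0 (ip0r hip) Nc0.
have qp : 0 < q v by rewrite lt_neqAle eq_sym hq (q_ge0 hip).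
set r := Num.sqrt (q v).
have rp : 0 < r by rewrite sqrtr_gt0.
have rr : r * r = q v by rewrite -expr2 sqr_sqrtr // ltW.
set u := (r^-1)%:C *: v.
have hu : ip u u = 1.
  rewrite (ipZl hip) (ipZr hip) conjR (ipxx hip).

  apply/eqP; rewrite eq_complex /= ?(mulr0, mul0r, subr0, addr0, add0r, oppr0, eqxx, andbT).
  by rewrite mulrA -invfM rr mulVf // gt_eqF.
have ev : v = r%:C *: u by rewrite /u scalerA mulR divff ?gt_eqF // scale1r.
have hPv : Pa v = (r * r)%:C * Pa u.
  by rewrite /Pa {1 2}ev AZ (ipZl hip) (ipZr hip) conjR mulrA mulR.

rewrite hPv NcM NcR ger0_norm ?rr; last exact: (q_ge0 hip).
have := Pw hu; rewrite -/wv => h; rewrite mulrC ler_wpM2r // ltW //.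
Qed.

Lemma Nc4 : Nc (4%:R : R[i]) = 4%:R.
Proof. by rewrite -(rmorph_nat (real_complex R)) NcR normr_nat. Qed.

Lemma polar_bound x y : Nc (ip (A x) y) <= wv * (q x + q y).
Proof.
have e := polar x y.
have hq := polarq x y.
rewrite !(ipxx hip) in hq.
have hQ : q (x + y) + q (x - y) + q (x + 'i *: y) + q (x - 'i *: y) = 4%:R * (q x + q y).
  by apply: complexI; rewrite !rmorphD rmorphM /= rmorph_nat hq rmorphD.
set P1 := Pa (x + y) in e; set P2 := Pa (x - y) in e.
set P3 := Pa (x + 'i *: y) in e; set P4 := Pa (x - 'i *: y) in e.
have t1 := NcD (P1 - P2 + 'i * P3) (- ('i * P4)).
have t2 := NcD (P1 - P2) ('i * P3).
have t3 := NcD P1 (- P2).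
rewrite !NcN !NcM Nc_i !mul1r in t1 t2 t3.
have := congr1 Nc e; rewrite NcM Nc4 => e'.
have := Pv (x + y); have := Pv (x - y); have := Pv (x + 'i *: y); have := Pv (x - 'i *: y).
rewrite -/P1 -/P2 -/P3 -/P4 => h4 h3 h2 h1.
have : 4%:R * Nc (ip (A x) y) <= wv * (4%:R * (q x + q y)).
  rewrite e' -hQ; lra.
lra.
Qed.

Variable e0 : V.
Hypothesis he0 : ip e0 e0 = 1.

Lemma w_ge0 : 0 <= wv.
Proof. by apply: le_trans (Pw he0); apply: Nc_ge0. Qed.

Lemma q1 x : ip x x = 1 -> q x = 1.
Proof. by move=> h; apply: complexI; rewrite -(ipxx hip) h. Qed.

Lemma Ax_le x : ip x x = 1 -> hnorm ip (A x) <= 2%:R * wv.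
Proof.
move=> hx; rewrite hnormE.
have [hp|hp] := eqVneq (q (A x)) 0.
  by rewrite hp sqrtr0 mulr_ge0 ?w_ge0.
have qp : 0 < q (A x) by rewrite lt_neqAle eq_sym hp (q_ge0 hip).
set r := Num.sqrt (q (A x)).
have rp : 0 < r by rewrite sqrtr_gt0.
have rr : r * r = q (A x) by rewrite -expr2 sqr_sqrtr // ltW.
set y := (r^-1)%:C *: A x.
have hy : ip y y = 1.
  rewrite (ipZl hip) (ipZr hip) conjR (ipxx hip) -rr.
  apply/eqP; rewrite eq_complex /= ?(mulr0, mul0r, subr0, addr0, add0r, oppr0, eqxx, andbT).
  by rewrite mulrA -invfM mulVf // gt_eqF // mulr_gt0.
have hb := polar_bound x y.
rewrite (q1 hx) (q1 hy) in hb.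
have e : ip (A x) y = (r^-1)%:C * (q (A x))%:C by rewrite (ipZr hip) conjR (ipxx hip).
rewrite e NcM !NcR in hb.
rewrite (ger0_norm (q_ge0 hip (A x))) ger0_norm in hb; last by rewrite invr_ge0 ltW.
rewrite -rr mulrA mulVf ?gt_eqF // mul1r in hb.
lra.
Qed.

Lemma lower : 1 / 2%:R - (`|a - 1| + `|b|) <= sup Sset.
Proof.
have : opnorm ip A <= 2%:R * wv.
  apply: ge_sup.
    exists (hnorm ip (A e0)); exists e0 => //; exact/(unit_sphereE hip).
  by move=> _ [x hx <-]; apply: Ax_le; exact/(unit_sphereE hip).
rewrite hn /wv; lra.
Qed.

End Op.

Section Up.
Local Open Scope complex_scope.
Variable R : realType.
Variable V : lmodType R[i].
Variable ip : V -> V -> R[i].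
Hypothesis hip : inner_product ip.
Notation Nc := (@ComplexField.Normc.normc R).
Notation q := (@q _ _ ip).
Variables e1 e2 : V.
Hypotheses (h1 : ip e1 e1 = 1) (h2 : ip e2 e2 = 1) (h12 : ip e1 e2 = 0).

Definition Az x := ip x e1 *: e2.
Definition Bz y := ip y e2 *: e1.

Lemma hnormZ c e : ip e e = 1 -> hnorm ip (c *: e) = Nc c.
Proof.
move=> he; rewrite hnormE.
have -> : q (c *: e) = Nc c ^+ 2.
  apply: complexI; rewrite -(ipxx hip) (ipZl hip) (ipZr hip) he mulr1 Nc2.
  by rewrite mulrC.
by rewrite sqrtr_sqr ger0_norm // Nc_ge0.
Qed.

Lemma Nc_le_hnorm x e : ip e e = 1 -> Nc (ip x e) <= hnorm ip x.
Proof.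
move=> he; rewrite hnormE -(ger0_norm (Nc_ge0 (ip x e))) -sqrtr_sqr.
by apply: ler_wsqrtr; apply: bessel1R.
Qed.

Lemma Az_bounded : bounded_op ip Az.
Proof.
split.
  by move=> c x y; rewrite /Az (ipZDl hip) scalerDl scalerA.
exists 1 => x; rewrite mul1r /Az (hnormZ _ h2); exact: Nc_le_hnorm.
Qed.

Lemma Az_norm (he : exists x, unit_sphere ip x) : opnorm ip Az = 1.
Proof.
have hub : ubound [set hnorm ip (Az x) | x in unit_sphere ip] 1.
  move=> _ [x hx <-]; rewrite /Az (hnormZ _ h2) -hx; exact: Nc_le_hnorm.
apply/le_anti/andP; split.
  apply: ge_sup => //; exists (hnorm ip (Az e1)); exists e1 => //.
  exact/(unit_sphereE hip).
have -> : 1 = hnorm ip (Az e1) by rewrite /Az (hnormZ _ h2) h1 ComplexField.Normc.normc1.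
apply: (ub_le_sup (ex_intro _ 1 hub)); exists e1 => //; exact/(unit_sphereE hip).
Qed.

Lemma Az_adj : is_adjoint ip Az Bz.
Proof.
move=> x y; rewrite /Az /Bz (ipZl hip) (ipZr hip) (ipC hip e2 y) NconjK; exact: mulrC.
Qed.

Lemma omega0 (a b : R) :
  sup [set Nc (ip (a%:C *: Az x + b%:C *: Bz x) x) | x in unit_sphere ip]
   <= (`|a| + `|b|) / 2%:R.
Proof.
apply: ge_sup.
  exists (Nc (ip (a%:C *: Az e1 + b%:C *: Bz e1) e1)); exists e1 => //.
  exact/(unit_sphereE hip).
move=> _ [x hx <-].
have hx1 : q x = 1 by apply: q1 => //; exact/(unit_sphereE hip).
rewrite /Az /Bz (ipDl hip) !(ipZl hip) (ipC hip x e1) (ipC hip x e2).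
have hb := bessel2R hip x h1 h2 h12.
set al := ip x e1 in hb *; set be := ip x e2 in hb *.
have t := NcD (a%:C * (al * conjc be)) (b%:C * (be * conjc al)).
rewrite !NcM !NcJ' !NcR in t.
rewrite hx1 in hb.
have := Nc_ge0 al; have := Nc_ge0 be; have := normr_ge0 a; have := normr_ge0 b.
move=> hb0 ha0 hbe hal.
have hm : Nc al * Nc be <= 1 / 2%:R.
  have := sqr_ge0 (Nc al - Nc be); rewrite sqrrB; lra.
have h3 : `|a| * (Nc al * Nc be) <= `|a| * (1 / 2%:R) by rewrite ler_wpM2l.
have h4 : `|b| * (Nc al * Nc be) <= `|b| * (1 / 2%:R) by rewrite ler_wpM2l.
rewrite [Nc be * Nc al]mulrC in t.
lra.
Qed.

End Up.


Lemma nt_bounds (R : realType) (V : lmodType R[i]) (ip : V -> V -> R[i])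
  (hip : inner_product ip) (e1 e2 : V)
  (h1 : ip e1 e1 = 1) (h2 : ip e2 e2 = 1) (h12 : ip e1 e2 = 0)
  (f g : R -> R) (t : R) :
  1 / 2%:R - (`|f t - 1| + `|g t|) <= n_t ip f g t /\
  n_t ip f g t <= (`|f t| + `|g t|) / 2%:R.
Proof.
rewrite /n_t; set W := (X in inf X).
have lb : lbound W (1 / 2%:R - (`|f t - 1| + `|g t|)).
  move=> _ [A [B [hA hn hadj ->]]]; rewrite /omega_t.
  exact: (@lower R V ip hip A B hA hadj hn (f t) (g t) e1 h1).
have hex : exists x, unit_sphere ip x by exists e1; exact/(unit_sphereE hip).
have ne : W (omega_t ip f g t (Az ip e1 e2) (Bz ip e1 e2)).
  exists (Az ip e1 e2), (Bz ip e1 e2); split => //.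
  - exact: Az_bounded.
  - exact: Az_norm.
  - exact: Az_adj.
split.
  by apply: lb_le_inf => //; eexists; exact: ne.
apply: le_trans (ge_inf (ex_intro _ _ lb) ne) _.
exact: omega0.
Qed.

Unset Implicit Arguments.
Theorem corollary4p9 (R : realType) (V : lmodType R[i]) (ip : V -> V -> R[i])
  (hH : hilbert ip)
  (hdim : exists x y : V, hnorm ip x = 1 /\ hnorm ip y = 1 /\ ip x y = 0)
  (phi psi : nat -> R -> R)
  (hphic : forall n, {within `[(0:R), 1], continuous (phi n)})
  (hpsic : forall n, {within `[(0:R), 1], continuous (psi n)})
  (hphi : forall t, t \in `[(0:R), 1] -> phi n t @[n --> \oo] --> (1:R))
  (hpsi : forall t, t \in `[(0:R), 1] -> psi n t @[n --> \oo] --> (0:R)) :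
  forall t, t \in `[(0:R), 1] -> n_t ip (phi n) (psi n) t @[n --> \oo] --> (1 / 2 : R).
Proof.
move=> t ht.
have hip : inner_product ip by case: hH.
case: hdim => e1 [e2 [he1 [he2 h12]]].
have h1 := proj1 (unit_sphereE hip e1) he1.
have h2 := proj1 (unit_sphereE hip e2) he2.
apply/cvgrPdist_le => e e0.
have e2p : 0 < e / 2%:R by rewrite divr_gt0.
have hp := (cvgrPdist_le _ _).1 (hphi t ht) _ e2p.
have hq := (cvgrPdist_le _ _).1 (hpsi t ht) _ e2p.
near=> n.
have hpn : `|1 - phi n t| <= e / 2%:R by near: n; exact: hp.
have hqn : `|0 - psi n t| <= e / 2%:R by near: n; exact: hq.
have [lo up] := nt_bounds hip h1 h2 h12 (phi n) (psi n) t.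
have d1 : `|phi n t - 1| = `|1 - phi n t| by rewrite distrC.
have d2 : `|0 - psi n t| = `|psi n t| by rewrite sub0r normrN.
have d3 : `|phi n t| <= 1 + `|phi n t - 1|.
  by have := ler_normD 1 (phi n t - 1); rewrite addrC subrK normr1.
rewrite ler_norml; apply/andP; split; lra.
Unshelve. all: by end_near.
Qed.
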